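(* Let $(G,\mathcal{T},(A^\circ,B^\circ),k)$ be a Terminal Separation instance, let $\mathcal{T}'$ be the set of terminal pairs disjoint from $A^\circ\cup B^\circ$, and let $\{s,t\}\in\mathcal{T}'$. Suppose $(A_s,B_t)$ and $(A_s',B_t')$ are maximal terminal separations, each of minimum cost among terminal separations extending $(A^\circ\cup\{s\},B^\circ\cup\{t\})$, and that neither of them contains in the union of its two sides any terminal pair of $\mathcal{T}'$ other than $\{s,t\}$. Then (a) $d(A_s)=d(A_s')$ and $d(B_t)=d(B_t')$; (b) $(A_s\cap A_s',B_t\cup B_t')$ and $(A_s\cup A_s',B_t\cap B_t')$ are also terminal separations of minimum cost among separations extending $(A^\circ\cup\{s\},B^\circ\cup\{t\})$; (c) $A_s\cup B_t=A_s'\cup B_t'$.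
   Context: Graphs may have multiple edges but no loops; $d(X)$ is the number of edges with exactly one endpoint in $X$. For a family $\mathcal{T}$ of pairwise disjoint vertex pairs (terminals are their vertices), a terminal separation is a pair $(A,B)$ of disjoint vertex sets such that each pair in $\mathcal{T}$ either has one vertex in $A$ and one in $B$ or is disjoint from $A\cup B$; $(A',B')$ extends $(A,B)$ if $A\subseteq A'$, $B\subseteq B'$; cost $c(A,B)=(d(A)+d(B))/2$; a terminal separation is maximal if every other terminal separation extending it has strictly larger cost. A Terminal Separation instance $(G,\mathcal{T},(A^\circ,B^\circ),k)$ has every terminal of degree at most one and $(A^\circ,B^\circ)$ a terminal separation. *)

(* Defs.v *)
From mathcomp Require Import all_boot all_order all_algebra.
Set Implicit Arguments. Unset Strict Implicit. Unset Printing Implicit Defensive.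
Import GRing.Theory Num.Theory.

(* A multigraph without loops: finite vertex type V, finite edge type E,
   endpoints src e, tgt e (the orientation is irrelevant), with src e <> tgt e. *)
Definition loopless (V E : finType) (src tgt : E -> V) : Prop :=
  forall e, src e != tgt e.

Definition dcut (V E : finType) (src tgt : E -> V) (X : {set V}) : nat :=
  #|[set e : E | (src e \in X) != (tgt e \in X)]|.

(* degree of a vertex = d({v}) (graph is loopless) *)
Definition deg (V E : finType) (src tgt : E -> V) (v : V) : nat :=
  dcut src tgt [set v].

Definition terminal_family (V : finType) (T : {set {set V}}) : Prop :=
  (forall P, P \in T -> #|P| = 2) /\ trivIset T.

Definition tsep (V : finType) (T : {set {set V}}) (A B : {set V}) : Prop :=
  [disjoint A & B] /\
  forall P, P \in T ->
    (#|P :&: A| = 1 /\ #|P :&: B| = 1) \/ [disjoint P & A :|: B].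

Definition extends (V : finType) (A B A' B' : {set V}) : Prop :=
  A \subset A' /\ B \subset B'.

Definition cost (V E : finType) (src tgt : E -> V) (A B : {set V}) : rat :=
  ((dcut src tgt A + dcut src tgt B)%:R / 2%:R)%R.

Definition maximal_tsep (V E : finType) (src tgt : E -> V) (T : {set {set V}})
    (A B : {set V}) : Prop :=
  tsep T A B /\
  forall A' B', tsep T A' B' -> extends A B A' B' -> (A', B') <> (A, B) ->
    (cost src tgt A B < cost src tgt A' B')%R.

Definition min_ext_tsep (V E : finType) (src tgt : E -> V) (T : {set {set V}})
    (A0 B0 A B : {set V}) : Prop :=
  tsep T A B /\ extends A0 B0 A B /\
  forall A' B', tsep T A' B' -> extends A0 B0 A' B' ->
    (cost src tgt A B <= cost src tgt A' B')%R.

(* Terminal Separation instance (the budget k plays no role here) *)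
Definition ts_instance (V E : finType) (src tgt : E -> V) (T : {set {set V}})
    (A0 B0 : {set V}) : Prop :=
  loopless src tgt /\ terminal_family T /\
  (forall v, v \in cover T -> deg src tgt v <= 1) /\ tsep T A0 B0.

Definition Tfree (V : finType) (T : {set {set V}}) (A0 B0 : {set V}) : {set {set V}} :=
  [set P in T | [disjoint P & A0 :|: B0]].

(* Main.v *)
Require Import Defs.
From mathcomp Require Import all_boot all_order all_algebra.
From mathcomp Require Import zify.
Import GRing.Theory Num.Theory.
Set Implicit Arguments. Unset Strict Implicit. Unset Printing Implicit Defensive.

Lemma dcut_sum (V E : finType) (src tgt : E -> V) (X : {set V}) :
  dcut src tgt X = \sum_e (((src e \in X) != (tgt e \in X)) : nat).
Proof.
rewrite /dcut -sum1_card big_mkcond /=; apply: eq_bigr => e _.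
by rewrite inE; case: (_ != _).
Qed.

Lemma submod (V E : finType) (src tgt : E -> V) (X Y : {set V}) :
  dcut src tgt (X :&: Y) + dcut src tgt (X :|: Y) <= dcut src tgt X + dcut src tgt Y.
Proof.
rewrite !dcut_sum -!big_split /=; apply: leq_sum => e _; rewrite !inE.
by move: (src e \in X) (src e \in Y) (tgt e \in X) (tgt e \in Y) => [] [] [] [].
Qed.

Lemma posimod (V E : finType) (src tgt : E -> V) (X Y : {set V}) :
  dcut src tgt (X :\: Y) + dcut src tgt (Y :\: X) <= dcut src tgt X + dcut src tgt Y.
Proof.
rewrite !dcut_sum -!big_split /=; apply: leq_sum => e _; rewrite !inE.
by move: (src e \in X) (src e \in Y) (tgt e \in X) (tgt e \in Y) => [] [] [] [].
Qed.

Lemma cost_le (V E : finType) (src tgt : E -> V) (A B A' B' : {set V}) :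
  (cost src tgt A B <= cost src tgt A' B')%R =
  (dcut src tgt A + dcut src tgt B <= dcut src tgt A' + dcut src tgt B').
Proof. by rewrite /cost ler_pM2r ?invr_gt0 ?ltr0n // ler_nat. Qed.

Lemma cost_lt (V E : finType) (src tgt : E -> V) (A B A' B' : {set V}) :
  (cost src tgt A B < cost src tgt A' B')%R =
  (dcut src tgt A + dcut src tgt B < dcut src tgt A' + dcut src tgt B').
Proof. by rewrite /cost ltr_pM2r ?invr_gt0 ?ltr0n // ltr_nat. Qed.

Lemma split_sub (V : finType) (P A B : {set V}) :
  #|P| = 2 -> #|P :&: A| = 1 -> #|P :&: B| = 1 -> [disjoint A & B] ->
  P \subset A :|: B.
Proof.
move=> h2 hA hB dAB.
have e0 : (P :&: A) :&: (P :&: B) = set0.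
  apply/setP => x; rewrite !inE; case xA: (x \in A); last by rewrite !andbF.
  by rewrite (disjointFr dAB xA) !andbF.
have hc : #|P :&: (A :|: B)| = #|P|.
  by rewrite setIUr cardsU e0 cards0 hA hB h2.
have := subset_leqif_cards (subsetIl P (A :|: B)); case=> _.
rewrite hc eqxx => /esym /eqP h.
by apply/setIidPl.
Qed.

Lemma free_disj (V : finType) (T : {set {set V}}) (A B P : {set V}) :
  terminal_family T -> tsep T A B -> P \in T -> ~~ (P \subset A :|: B) ->
  [disjoint P & A :|: B].
Proof.
move=> [h2 _] [dAB hT] PT nsub.
case: (hT P PT) => // [[hA hB]].
by rewrite (split_sub (h2 P PT) hA hB dAB) in nsub.
Qed.

Lemma tsep_gen (V : finType) (T : {set {set V}}) (A0 B0 : {set V}) (s t : V)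
    (As Bt As' Bt' X Y : {set V}) :
  terminal_family T -> tsep T A0 B0 ->
  tsep T As Bt -> tsep T As' Bt' ->
  (forall P, P \in Tfree T A0 B0 -> P != [set s; t] -> ~~ (P \subset As :|: Bt)) ->
  (forall P, P \in Tfree T A0 B0 -> P != [set s; t] -> ~~ (P \subset As' :|: Bt')) ->
  [disjoint X & Y] -> s |: A0 \subset X -> t |: B0 \subset Y ->
  X :|: Y \subset (As :|: Bt) :|: (As' :|: Bt') -> tsep T X Y.
Proof.
move=> TF [dA0 hT0] tA tA' ns ns' dXY sX tY sub.
split=> // P PT.
have sXs : s \in X by apply: (subsetP sX); rewrite !inE eqxx.
have tYt : t \in Y by apply: (subsetP tY); rewrite !inE eqxx.
have A0X : forall x, x \in A0 -> x \in X.
  by move=> x xA; apply: (subsetP sX); rewrite !inE xA orbT.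
have B0Y : forall x, x \in B0 -> x \in Y.
  by move=> x xB; apply: (subsetP tY); rewrite !inE xB orbT.
case: (boolP [disjoint P & A0 :|: B0]) => hPd.
  have PF : P \in Tfree T A0 B0 by rewrite inE PT hPd.
  case: (P =P [set s; t]) => [->|/eqP neq].
    left.
    have tX : t \in X = false by apply: (disjointFl dXY tYt).
    have sY : s \in Y = false by apply: (disjointFr dXY sXs).
    have e1 : [set s; t] :&: X = [set s].
      apply/setP => x; rewrite !inE.
      case: (x =P s) => [->|_] /=; first by rewrite sXs.
      by case: (x =P t) => [->|_] //=.
    have e2 : [set s; t] :&: Y = [set t].
      apply/setP => x; rewrite !inE.
      case: (x =P t) => [->|_] /=; first by rewrite tYt orbT.
      by case: (x =P s) => [->|_] //=.
    by rewrite e1 e2 !cards1.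
  right.
  have d1 := free_disj TF tA PT (ns P PF neq).
  have d2 := free_disj TF tA' PT (ns' P PF neq).
  rewrite disjoint_subset; apply/subsetP => x xP.
  have xXY : x \in X :|: Y -> False.
    move=> h; have := subsetP sub x h; rewrite inE => /orP [] h'.
      by rewrite (disjointFr d1 xP) in h'.
    by rewrite (disjointFr d2 xP) in h'.
  by rewrite !inE; apply/negP => h; apply: xXY; rewrite inE.
case: (hT0 P PT) => [[hA hB]|]; last by rewrite (negbTE hPd).
have PS := split_sub ((TF.1) P PT) hA hB dA0.
left.
have e1 : P :&: X = P :&: A0.
  apply/setP => x; rewrite !inE; case xP: (x \in P) => //=.
  have := subsetP PS x xP; rewrite inE => /orP [] h.
    by rewrite h A0X.
  by rewrite (disjointFl dXY (B0Y x h)) (disjointFl dA0 h).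
have e2 : P :&: Y = P :&: B0.
  apply/setP => x; rewrite !inE; case xP: (x \in P) => //=.
  have := subsetP PS x xP; rewrite inE => /orP [] h.
    by rewrite (disjointFr dXY (A0X x h)) (disjointFr dA0 h).
  by rewrite h B0Y.
by rewrite e1 e2.
Qed.

Ltac bcase := repeat match goal with
  | |- context [?a \in ?b] => case: (a \in b)
  | |- context [?a == ?b] => is_var a; case: (a == b) end.
Ltac solv F el eld :=
  first [apply: eld | apply: el]; let x := fresh "x" in move=> x;
  have := F x; rewrite !inE; bcase; done.

Theorem lemma5p3 (V E : finType) (src tgt : E -> V) (T : {set {set V}})
    (A0 B0 : {set V}) (k : nat) (s t : V)
    (As Bt As' Bt' : {set V}) :
  ts_instance src tgt T A0 B0 ->
  [set s; t] \in Tfree T A0 B0 ->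
  maximal_tsep src tgt T As Bt ->
  maximal_tsep src tgt T As' Bt' ->
  min_ext_tsep src tgt T (s |: A0) (t |: B0) As Bt ->
  min_ext_tsep src tgt T (s |: A0) (t |: B0) As' Bt' ->
  (forall P, P \in Tfree T A0 B0 -> P != [set s; t] -> ~~ (P \subset As :|: Bt)) ->
  (forall P, P \in Tfree T A0 B0 -> P != [set s; t] -> ~~ (P \subset As' :|: Bt')) ->
  [/\ dcut src tgt As = dcut src tgt As' /\ dcut src tgt Bt = dcut src tgt Bt',
      tsep T (As :&: As') (Bt :|: Bt') /\
        min_ext_tsep src tgt T (s |: A0) (t |: B0) (As :&: As') (Bt :|: Bt'),
      tsep T (As :|: As') (Bt :&: Bt') /\
        min_ext_tsep src tgt T (s |: A0) (t |: B0) (As :|: As') (Bt :&: Bt')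
    & As :|: Bt = As' :|: Bt'].
Proof.
move=> [_ [TF [_ tA0]]] stF [tAB maxAB] [tAB' maxAB'] [_ [[sA tB] minAB]]
  [_ [[sA' tB'] minAB']] ns ns'.
have F : forall x, [&& ~~((x \in As) && (x \in Bt)), ~~((x \in As') && (x \in Bt')),
   ~~((x \in A0) && (x \in B0)), ((x == s) || (x \in A0)) ==> (x \in As),
   ((x == s) || (x \in A0)) ==> (x \in As'), ((x == t) || (x \in B0)) ==> (x \in Bt)
   & ((x == t) || (x \in B0)) ==> (x \in Bt')].
  move=> x.
  have h1 : ~~((x \in As) && (x \in Bt)).
    by apply/negP => /andP [a b]; rewrite (disjointFr tAB.1 a) in b.
  have h2 : ~~((x \in As') && (x \in Bt')).
    by apply/negP => /andP [a b]; rewrite (disjointFr tAB'.1 a) in b.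
  have h3 : ~~((x \in A0) && (x \in B0)).
    by apply/negP => /andP [a b]; rewrite (disjointFr tA0.1 a) in b.
  rewrite h1 h2 h3 /=.
  by apply/and4P; split; apply/implyP => h;
    [apply: (subsetP sA) | apply: (subsetP sA') | apply: (subsetP tB) | apply: (subsetP tB')];
    rewrite !inE.
have el : forall X Y : {set V}, (forall x, (x \in X) ==> (x \in Y)) -> X \subset Y.
  by move=> X Y h; apply/subsetP => x; move/implyP: (h x).
have eld : forall X Y : {set V}, (forall x, ~~ ((x \in X) && (x \in Y))) -> [disjoint X & Y].
  move=> X Y h; rewrite disjoint_subset; apply/subsetP => x xX.
  by rewrite inE; apply/negP => xY; move: (h x); rewrite xX xY.
have lb : forall X Y : {set V}, tsep T X Y -> s |: A0 \subset X -> t |: B0 \subset Y ->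
    dcut src tgt As + dcut src tgt Bt <= dcut src tgt X + dcut src tgt Y.
  by move=> X Y h1 h2 h3; rewrite -cost_le; apply: minAB.
have lb' : forall X Y : {set V}, tsep T X Y -> s |: A0 \subset X -> t |: B0 \subset Y ->
    dcut src tgt As' + dcut src tgt Bt' <= dcut src tgt X + dcut src tgt Y.
  by move=> X Y h1 h2 h3; rewrite -cost_le; apply: minAB'.
have e0 : dcut src tgt As + dcut src tgt Bt = dcut src tgt As' + dcut src tgt Bt'.
  by apply/eqP; rewrite eqn_leq lb // lb'.
have TG : forall X Y : {set V}, [disjoint X & Y] -> s |: A0 \subset X -> t |: B0 \subset Y ->
    X :|: Y \subset (As :|: Bt) :|: (As' :|: Bt') -> tsep T X Y.
  by move=> X Y; apply: (tsep_gen TF tA0 tAB tAB' ns ns').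
have LB : forall X Y : {set V}, [disjoint X & Y] -> s |: A0 \subset X -> t |: B0 \subset Y ->
    X :|: Y \subset (As :|: Bt) :|: (As' :|: Bt') ->
    dcut src tgt As + dcut src tgt Bt <= dcut src tgt X + dcut src tgt Y.
  by move=> X Y h1 h2 h3 h4; apply: lb => //; apply: TG.
have hU : dcut src tgt As + dcut src tgt Bt <=
    dcut src tgt (As :&: As') + dcut src tgt (Bt :|: Bt').
  by apply: LB; solv F el eld.
have hW : dcut src tgt As + dcut src tgt Bt <=
    dcut src tgt (As :|: As') + dcut src tgt (Bt :&: Bt').
  by apply: LB; solv F el eld.
have hZ : dcut src tgt As + dcut src tgt Bt <=
    dcut src tgt (As :&: As') + dcut src tgt (Bt :&: Bt').
  by apply: LB; solv F el eld.
have hIB : dcut src tgt As + dcut src tgt Bt <=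
    dcut src tgt (As :&: As') + dcut src tgt Bt.
  by apply: LB; solv F el eld.
have hIB' : dcut src tgt As + dcut src tgt Bt <=
    dcut src tgt (As :&: As') + dcut src tgt Bt'.
  by apply: LB; solv F el eld.
have hK : dcut src tgt As + dcut src tgt Bt <=
    dcut src tgt (As :\: Bt') + dcut src tgt (Bt :\: As').
  by apply: LB; solv F el eld.
have hK' : dcut src tgt As + dcut src tgt Bt <=
    dcut src tgt (As' :\: Bt) + dcut src tgt (Bt' :\: As).
  by apply: LB; solv F el eld.
have sm1 := submod src tgt As As'.
have sm2 := submod src tgt Bt Bt'.
have pm1 := posimod src tgt (As :|: As') Bt.
have pm2 := posimod src tgt (Bt :|: Bt') As.
have pm1' := posimod src tgt (As :|: As') Bt'.
have pm2' := posimod src tgt (Bt :|: Bt') As'.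
have q1 : Bt :\: (As :|: As') = Bt :\: As'.
  by apply/eqP; rewrite eqEsubset; apply/andP; split; solv F el eld.
have q2 : As :\: (Bt :|: Bt') = As :\: Bt'.
  by apply/eqP; rewrite eqEsubset; apply/andP; split; solv F el eld.
have q1' : Bt' :\: (As :|: As') = Bt' :\: As.
  by apply/eqP; rewrite eqEsubset; apply/andP; split; solv F el eld.
have q2' : As' :\: (Bt :|: Bt') = As' :\: Bt.
  by apply/eqP; rewrite eqEsubset; apply/andP; split; solv F el eld.
rewrite q1 in pm1; rewrite q2 in pm2; rewrite q1' in pm1'; rewrite q2' in pm2'.
have tXY : tsep T ((As :|: As') :\: Bt) ((Bt :|: Bt') :\: As).
  by apply: TG; solv F el eld.
have tXY' : tsep T ((As :|: As') :\: Bt') ((Bt :|: Bt') :\: As').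
  by apply: TG; solv F el eld.
have hXY := lb _ _ tXY ltac:(solv F el eld) ltac:(solv F el eld).
have hXY' := lb _ _ tXY' ltac:(solv F el eld) ltac:(solv F el eld).
have eXY : ((As :|: As') :\: Bt, (Bt :|: Bt') :\: As) = (As, Bt).
  case: (eqVneq ((As :|: As') :\: Bt, (Bt :|: Bt') :\: As) (As, Bt)) => [//|/eqP ne].
  have ext : extends As Bt ((As :|: As') :\: Bt) ((Bt :|: Bt') :\: As) by split; solv F el eld.
  have := maxAB _ _ tXY ext ne.
  rewrite cost_lt; lia.
have eXY' : ((As :|: As') :\: Bt', (Bt :|: Bt') :\: As') = (As', Bt').
  case: (eqVneq ((As :|: As') :\: Bt', (Bt :|: Bt') :\: As') (As', Bt')) => [//|/eqP ne].
  have ext : extends As' Bt' ((As :|: As') :\: Bt') ((Bt :|: Bt') :\: As') by split; solv F el eld.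
  have := maxAB' _ _ tXY' ext ne.
  rewrite cost_lt; lia.
case: eXY => eX eY; case: eXY' => eX' eY'.
have G : forall x, [&& (x \in (As :|: As') :\: Bt) == (x \in As),
   (x \in (Bt :|: Bt') :\: As) == (x \in Bt),
   (x \in (As :|: As') :\: Bt') == (x \in As')
   & (x \in (Bt :|: Bt') :\: As') == (x \in Bt')].
  by move=> x; rewrite eX eY eX' eY' !eqxx.
have F2 := fun x => introT andP (conj (F x) (G x)).
have q3 : As :\: Bt' = As :&: As'.
  by apply/eqP; rewrite eqEsubset; apply/andP; split; solv F2 el eld.
have q4 : Bt :\: As' = Bt :&: Bt'.
  by apply/eqP; rewrite eqEsubset; apply/andP; split; solv F2 el eld.
rewrite eX q4 in pm1; rewrite eY q3 in pm2.
have hc : As :|: Bt = As' :|: Bt'.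
  by apply/setP => x; have := F2 x; rewrite !inE; bcase.
have hUt : tsep T (As :&: As') (Bt :|: Bt') by apply: TG; solv F el eld.
have hWt : tsep T (As :|: As') (Bt :&: Bt') by apply: TG; solv F el eld.
split => //.
- split; lia.
- split => //; split => //; split; first by split; solv F el eld.
  move=> A' B' h1 [h2 h3]; rewrite cost_le; have := lb A' B' h1 h2 h3; lia.
- split => //; split => //; split; first by split; solv F el eld.
  move=> A' B' h1 [h2 h3]; rewrite cost_le; have := lb A' B' h1 h2 h3; lia.
Qed.
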